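(* Let $n\ge2$, $k\in\{1,\dots,n\}$ and let $W_1,\dots,W_n$ be the Pauli strings on $n-1$ qubits defined in the context. For $1\le m<k$ let $G_m=iW_{m+1}W_m$, and for $k\le m<n$ let $G_m=iW_mW_{m+1}$; for any real $\theta$ let $R_m=\exp(-i\theta G_m/2)$. Then for $1\le m<k$ we have $R_mW_jR_m^\dagger=W_j$ for every $j$ with $m+1<j\le n$; and for $k\le m<n$ we have $R_mW_jR_m^\dagger=W_j$ for every $j$ with $1\le j<k$.
   Context: $X_j,Y_j,Z_j$ are Pauli operators on qubit $j$ of an $(n-1)$-qubit system; empty products of $Z$'s are the identity. For $k\ne n$: for $1\le j<k$, $W_j=Y_jZ_{j+1}\cdots Z_{k-1}Y_k$; $W_k=Z_k$; for $k<j<n$, $W_j=X_kZ_{k+1}\cdots Z_{j-1}X_j$; and $W_n=X_kZ_{k+1}\cdots Z_{n-1}$. For $k=n$: for $1\le j<n$, $W_j=-Z_1Z_2\cdots Z_{j-1}X_j$; $W_n=\prod_{j=1}^{n-1}Z_j$. *)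

(* Defs.v *)
From mathcomp Require Import all_boot all_algebra.
From mathcomp Require Import all_classical all_reals all_analysis.
From mathcomp Require Import complex.
Import GRing.Theory Num.Theory numFieldNormedType.Exports.

Set Implicit Arguments.
Unset Strict Implicit.
Unset Printing Implicit Defensive.

Local Open Scope ring_scope.

Inductive pauli := PI | PX | PY | PZ.

Section Defs.
Variable R : realType.

Definition pauli_mx (p : pauli) : 'M[R[i]]_2 :=
  match p with
  | PI => 1%:M
  | PX => \matrix_(a < 2, b < 2) (if (a : nat) != b then 1 else 0)
  | PY => \matrix_(a < 2, b < 2)
            (if ((a : nat) == 0%N) && ((b : nat) == 1%N) then - 'i%C
             else if ((a : nat) == 1%N) && ((b : nat) == 0%N) then 'i%C else 0)
  | PZ => \matrix_(a < 2, b < 2)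
            (if (a : nat) == b then (if (a : nat) == 0%N then 1 else -1) else 0)
  end.

(* the j-th bit of a basis index a : 'I_(2^q) (qubit j+1 <-> bit j) *)
Definition bit (q : nat) (a : 'I_(2 ^ q)) (j : 'I_q) : 'I_2 :=
  inord ((a %/ 2 ^ j) %% 2).

(* Pauli string (tensor product) on q qubits; position j : 'I_q is qubit j+1 *)
Definition pstring (q : nat) (s : 'I_q -> pauli) : 'M[R[i]]_(2 ^ q) :=
  \matrix_(a, b) \prod_(j < q) pauli_mx (s j) (bit a j) (bit b j).

(* letter of W_j on qubit l (1-based, 1 <= l <= n-1), as in the context *)
Definition Wletter (n k j l : nat) : pauli :=
  if k != n then
    if (j < k)%N then
      (if (l == j) || (l == k) then PY else if (j < l < k)%N then PZ else PI)
    else if j == k then (if l == k then PZ else PI)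
    else if (j < n)%N then
      (if (l == k) || (l == j) then PX else if (k < l < j)%N then PZ else PI)
    else
      (if l == k then PX else if (k < l)%N then PZ else PI)
  else
    if (j < n)%N then
      (if (l < j)%N then PZ else if l == j then PX else PI)
    else PZ.

Definition W (n k j : nat) : 'M[R[i]]_(2 ^ (n - 1)) :=
  (if (k == n) && (j < n)%N then -1 else 1) *:
    pstring (fun l : 'I_(n - 1) => Wletter n k j l.+1).

Definition adjmx (m : nat) (A : 'M[R[i]]_m) : 'M[R[i]]_m :=
  (map_mx (@conjc R) A)^T.

(* matrix powers and the matrix exponential as the limit of the power series
   sum_t A^t / t!, taken entrywise (real and imaginary parts) *)
Definition mxpow (m : nat) (A : 'M[R[i]]_m) (t : nat) : 'M[R[i]]_m :=
  iter t (mulmx A) 1%:M.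

Definition exp_partial (m : nat) (A : 'M[R[i]]_m) (N : nat) : 'M[R[i]]_m :=
  \sum_(t < N) (t`!%:R)^-1 *: mxpow A t.

Definition expmx (m : nat) (A : 'M[R[i]]_m) : 'M[R[i]]_m :=
  \matrix_(a, b)
    ((limn (fun N => complex.Re (exp_partial A N a b)))
       +i* (limn (fun N => complex.Im (exp_partial A N a b))))%C.

Definition Gen (n k m : nat) : 'M[R[i]]_(2 ^ (n - 1)) :=
  if (m < k)%N then 'i%C *: (W n k m.+1 *m W n k m)
  else 'i%C *: (W n k m *m W n k m.+1).

Definition Rot (n k : nat) (theta : R) (m : nat) : 'M[R[i]]_(2 ^ (n - 1)) :=
  expmx (- ('i%C * (theta%:C)%C / 2) *: Gen n k m).

End Defs.

(* Main.v *)
Require Import Defs.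
From mathcomp Require Import all_boot all_algebra.
From mathcomp Require Import all_classical all_reals all_analysis.
From mathcomp Require Import complex.
From mathcomp Require Import zify ring lra.
Import GRing.Theory Num.Theory numFieldNormedType.Exports.
Local Open Scope ring_scope.
Set Implicit Arguments.
Unset Strict Implicit.
Unset Printing Implicit Defensive.

Lemma bits_inj q (a b : nat) : (a < 2^q)%N -> (b < 2^q)%N ->
  (forall j, (j < q)%N -> (a %/ 2^j) %% 2 = (b %/ 2^j) %% 2)%N -> a = b.
Proof.
elim: q a b => [|q IH] a b.
  rewrite expn0 => ha hb _; case: a ha => [|?] // _; case: b hb => [|?] //.
move=> ha hb h.
rewrite (divn_eq a 2) (divn_eq b 2).
have h0 := h 0%N isT. rewrite !expn0 !divn1 in h0. rewrite h0.
congr (_ * _ + _)%N.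
apply: IH.
- by rewrite ltn_divLR // -expnSr.
- by rewrite ltn_divLR // -expnSr.
- move=> j hj; have := h j.+1 hj; by rewrite expnS !divnMA.
Qed.

Section Tensor.
Variable R : realType.
Local Notation C := R[i].

Lemma bitE q (a : 'I_(2^q)) j : val (bit a j) = ((a %/ 2^j) %% 2)%N.
Proof. by rewrite /bit /= inordK // ltn_pmod. Qed.

Definition Bmap q (a : 'I_(2^q)) : {ffun 'I_q -> 'I_2} := [ffun j => bit a j].

Lemma Bmap_inj q : injective (@Bmap q).
Proof.
move=> a b /ffunP h; apply: val_inj; apply: (@bits_inj q) => //=.
move=> j hj; have := h (Ordinal hj); rewrite !ffunE => /(congr1 val).
by rewrite !bitE.
Qed.

Lemma Bmap_bij q : bijective (@Bmap q).
Proof. apply: inj_card_bij (@Bmap_inj q) _; by rewrite card_ffun !card_ord. Qed.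

Definition ptensor q (M : 'I_q -> 'M[C]_2) : 'M[C]_(2^q) :=
  \matrix_(a, b) \prod_(j < q) M j (bit a j) (bit b j).

Lemma ptensorM q (M N : 'I_q -> 'M[C]_2) :
  ptensor M *m ptensor N = ptensor (fun j => M j *m N j).
Proof.
apply/matrixP => a c; rewrite !mxE.
rewrite [RHS](eq_bigr (fun j => \sum_(x < 2) M j (bit a j) x * N j x (bit c j))); last first.
  by move=> j _; rewrite mxE.
rewrite bigA_distr_bigA /= (reindex (@Bmap q)) /=; last first.
  by apply: onW_bij; apply: Bmap_bij.
apply: eq_bigr => b _; rewrite !mxE -big_split /=.
by apply: eq_bigr => j _; rewrite ffunE.
Qed.

Definition sgn (b : bool) : C := if b then -1 else 1.
Definition anti (p r : pauli) : bool :=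
  match p, r with
  | PI, _ => false | _, PI => false | PX, PX => false | PY, PY => false
  | PZ, PZ => false | _, _ => true end.

Lemma pauli_sq p : pauli_mx R p *m pauli_mx R p = 1%:M.
Proof.
apply/matrixP => x y; case: p; rewrite /= !mxE !big_ord_recl !big_ord0 ?mxE;
case: x => [[|[|?]] ?] //; case: y => [[|[|?]] ?] //=; rewrite ?mxE /=; simpc => //.
Qed.

Lemma mulii : 'i * 'i = -1 :> C.
Proof. by rewrite -expr2 sqr_i. Qed.

Lemma pauli_comm p r :
  pauli_mx R p *m pauli_mx R r = sgn (anti p r) *: (pauli_mx R r *m pauli_mx R p).
Proof.
apply/matrixP => x y; case: p; case: r; rewrite /= !mxE !big_ord_recl !big_ord0 ?mxE;
case: x => [[|[|?]] ?] //; case: y => [[|[|?]] ?] //=; rewrite ?mxE /=;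
rewrite ?(mul0r,mulr0,add0r,addr0,mul1r,mulr1,mulN1r,mulrN1,mulrN,mulNr,opprK,mulii,oppr0) //.
Qed.

Lemma pauli_adj p : adjmx (pauli_mx R p) = pauli_mx R p.
Proof.
apply/matrixP => x y; case: p; rewrite /adjmx /= !mxE;
case: x => [[|[|?]] ?] //; case: y => [[|[|?]] ?] //=; rewrite ?mxE /=; simpc => //.
Qed.

Lemma ptensorZ q (c : 'I_q -> C) (M : 'I_q -> 'M[C]_2) :
  ptensor (fun j => c j *: M j) = (\prod_j c j) *: ptensor M.
Proof.
apply/matrixP => a b; rewrite !mxE -big_split /=.
by apply: eq_bigr => j _; rewrite mxE.
Qed.

Lemma ptensor1 q : ptensor (fun _ : 'I_q => 1%:M) = 1%:M.
Proof.
apply/matrixP => a b; rewrite !mxE.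
case: (boolP [forall j, bit a j == bit b j]) => [/forallP h|].
  have -> : a = b.
    by apply: (@Bmap_inj q); apply/ffunP => j; rewrite !ffunE; apply/eqP.
  by rewrite eqxx big1 // => j _; rewrite mxE eqxx.
rewrite negb_forall => /existsP [j hj].
rewrite (bigD1 j) //= mxE (negbTE hj) mul0r.
case: eqP => // ab; move: hj; by rewrite ab eqxx.
Qed.

Lemma ptensor_adj q (M : 'I_q -> 'M[C]_2) :
  adjmx (ptensor M) = ptensor (fun j => adjmx (M j)).
Proof.
apply/matrixP => a b; rewrite !mxE rmorph_prod.
by apply: eq_bigr => j _; rewrite !mxE.
Qed.

Lemma pstringE q (s : 'I_q -> pauli) :
  pstring R s = ptensor (fun j => pauli_mx R (s j)).
Proof. by []. Qed.

Lemma pstring_sq q (s : 'I_q -> pauli) : pstring R s *m pstring R s = 1%:M.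
Proof.
rewrite pstringE ptensorM -[RHS]ptensor1.
by congr ptensor; apply/funext => j; rewrite pauli_sq.
Qed.

Lemma pstring_adj q (s : 'I_q -> pauli) : adjmx (pstring R s) = pstring R s.
Proof.
rewrite pstringE ptensor_adj.
by congr ptensor; apply/funext => j; rewrite pauli_adj.
Qed.

Lemma pstring_comm q (s t : 'I_q -> pauli) :
  pstring R s *m pstring R t = (\prod_j sgn (anti (s j) (t j))) *: (pstring R t *m pstring R s).
Proof.
rewrite !pstringE !ptensorM -ptensorZ.
by congr ptensor; apply/funext => j; rewrite pauli_comm.
Qed.
End Tensor.


Section Exp.
Local Open Scope complex_scope.
Local Open Scope ring_scope.
Variable R : realType.
Local Notation C := R[i].

Lemma coeffE (phi : R) t :
  (t`!%:R)^-1 * (- ('i%C * phi%:C)) ^+ t = (cos_coeff phi t)%:C - 'i%C * (sin_coeff phi t)%:C :> C.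
Proof.
have hc2 : (- ('i%C * phi%:C)) ^+ 2 = - (phi%:C ^+ 2) :> C.
  by rewrite sqrrN exprMn sqr_i mulN1r.
rewrite -[t](odd_double_half t); move: (t./2) => s; case: (odd t); rewrite /= ?add0n ?add1n.
- rewrite cos_coeff_odd sin_coeffE /= odd_double /= doubleK -!mul2n.
  rewrite !rmorphM /= !rmorphXn /= rmorphN1 fmorphV /= ?rmorph_nat /= ?rmorph1 ?rmorph0 /=.
  rewrite !exprS !exprM hc2 exprNn.
  ring.
- rewrite sin_coeff_even cos_coeffE /= odd_double /= doubleK -!mul2n.
  rewrite !rmorphM /= !rmorphXn /= rmorphN1 fmorphV /= ?rmorph_nat /= ?rmorph1 ?rmorph0 /=.
  rewrite !exprM hc2 exprNn.
  ring.
Qed.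

Lemma cplx_entry (x y d gx gy : R) :
  x%:C * d%:C - 'i%C * y%:C * (gx +i* gy) = (x * d + y * gy) +i* (- (y * gx)) :> C.
Proof. by simpc; congr Complex; ring. Qed.

Lemma cvg_cosS (x : R) : (series (cos_coeff x) @ \oo --> cos x)%classic.
Proof. by rewrite cos.unlock; apply: is_cvg_series_cos_coeff. Qed.
Lemma cvg_sinS (x : R) : (series (sin_coeff x) @ \oo --> sin x)%classic.
Proof. by rewrite sin.unlock; apply: is_cvg_series_sin_coeff. Qed.

Lemma adjmxD N (A B : 'M[C]_N) : adjmx (A + B) = adjmx A + adjmx B.
Proof. by apply/matrixP => a b; rewrite !mxE rmorphD. Qed.
Lemma adjmxZ N (x : C) (A : 'M[C]_N) : adjmx (x *: A) = conjc x *: adjmx A.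
Proof. by apply/matrixP => a b; rewrite !mxE rmorphM. Qed.
Lemma adjmx1 N : adjmx (1%:M : 'M[C]_N) = 1%:M.
Proof. by apply/matrixP => a b; rewrite !mxE eq_sym rmorph_nat. Qed.
Lemma adjmxM N (A B : 'M[C]_N) : adjmx (A *m B) = adjmx B *m adjmx A.
Proof. by rewrite /adjmx map_mxM trmx_mul. Qed.
Lemma muliiC : 'i%C * 'i%C = -1 :> C.
Proof. by rewrite -expr2 sqr_i. Qed.
Lemma conjI : conjc ('i%C : C) = - 'i%C.
Proof. by apply/eqP; rewrite eq_complex /= oppr0 !eqxx. Qed.

Variables (N : nat) (G : 'M[C]_N).
Hypothesis GG : G *m G = 1%:M.

Lemma mxpowG (c : C) t : mxpow (c *: G) t = c ^+ t *: (if odd t then G else 1%:M).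
Proof.
elim: t => [|t IH]; first by rewrite /mxpow /= expr0 scale1r.
rewrite /mxpow iterS -/(mxpow _ t) IH -scalemxAl -scalemxAr scalerA -exprS.
by rewrite /=; case: (odd t) => /=; rewrite ?GG ?mulmx1.
Qed.

Lemma exp_partialE (phi : R) K :
  exp_partial (- ('i%C * phi%:C) *: G) K =
  (series (cos_coeff phi) K)%:C *: 1%:M - ('i%C * (series (sin_coeff phi) K)%:C) *: G.
Proof.
rewrite /exp_partial.
rewrite (eq_bigr (fun t : 'I_K => (cos_coeff phi t)%:C *: 1%:M - ('i%C * (sin_coeff phi t)%:C) *: G)); last first.
  move=> t _; rewrite mxpowG scalerA coeffE; case: (boolP (odd t)) => ho.
    have -> : cos_coeff phi t = 0 by rewrite cos_coeffE /= ho mul0r !mul0r.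
    by rewrite rmorph0 sub0r !scaleNr scale0r sub0r.
  have -> : sin_coeff phi t = 0 by rewrite sin_coeffE /= (negbTE ho) !mul0r.
  by rewrite rmorph0 mulr0 subr0 scale0r subr0.
rewrite sumrB -!scaler_suml /series /= !big_mkord !rmorph_sum /= mulr_sumr.
done.
Qed.

Lemma expmxE (phi : R) :
  expmx (- ('i%C * phi%:C) *: G) = (cos phi)%:C *: 1%:M - ('i%C * (sin phi)%:C) *: G.
Proof.
apply/matrixP => a b; rewrite !mxE.
have hd : ((a == b)%:R : C) = ((a == b)%:R : R)%:C by rewrite rmorph_nat.
have E K : exp_partial (- ('i%C * phi%:C) *: G) K a b =
   (series (cos_coeff phi) K * (a == b)%:R + series (sin_coeff phi) K * complex.Im (G a b))
   +i* (- (series (sin_coeff phi) K * complex.Re (G a b))).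
  rewrite exp_partialE !mxE hd; case: (G a b) => gx gy /=; exact: cplx_entry.
rewrite (_ : (fun K => complex.Re (exp_partial (- ('i%C * phi%:C) *: G) K a b)) =
   fun K => series (cos_coeff phi) K * (a == b)%:R + series (sin_coeff phi) K * complex.Im (G a b)); last first.
  by apply/funext => K; rewrite E.
rewrite (_ : (fun K => complex.Im (exp_partial (- ('i%C * phi%:C) *: G) K a b)) =
   fun K => - (series (sin_coeff phi) K * complex.Re (G a b))); last first.
  by apply/funext => K; rewrite E.
rewrite hd; move: (G a b) => [gx gy] /=; rewrite cplx_entry.
congr Complex; apply: (cvg_lim (@Rhausdorff R)).
- apply: cvgD; apply: cvgMr_tmp; [exact: cvg_cosS | exact: cvg_sinS].
- apply: cvgN; apply: cvgMr_tmp; exact: cvg_sinS.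
Qed.

Lemma mul_lin (c e c' e' : C) :
  (c *: 1%:M + e *: G) *m (c' *: 1%:M + e' *: G) = (c * c' + e * e') *: 1%:M + (c * e' + e * c') *: G.
Proof.
rewrite mulmxDl !mulmxDr -!scalemxAl -!scalemxAr !mul1mx !mulmx1 GG !scalerA !scalerDl.
by rewrite [(e * c') *: G + _]addrC addrACA.
Qed.

Lemma rot_fix (theta : R) (W : 'M[C]_N) : adjmx G = G -> G *m W = W *m G ->
  expmx (- ('i%C * theta%:C / 2) *: G) *m W *m adjmx (expmx (- ('i%C * theta%:C / 2) *: G)) = W.
Proof.
move=> hG hW.
have -> : 'i%C * theta%:C / 2 = 'i%C * (theta / 2)%:C :> C.
  by rewrite rmorphM /= fmorphV /= rmorph_nat mulrA.
rewrite expmxE.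
set c := (cos _)%:C; set s := (sin _)%:C.
have eR : c *: 1%:M - ('i%C * s) *: G = c *: 1%:M + (- ('i%C * s)) *: G by rewrite scaleNr.
rewrite eR adjmxD !adjmxZ adjmx1 hG.
have hc : conjc c = c by rewrite /c conjc_real.
have he : conjc (- ('i%C * s)) = 'i%C * s.
  by rewrite /s; simpc; rewrite /= opprK.
rewrite hc he.
have AW : (c *: 1%:M + (- ('i%C * s)) *: G) *m W = W *m (c *: 1%:M + (- ('i%C * s)) *: G).
  by rewrite mulmxDl mulmxDr -!scalemxAl -!scalemxAr mul1mx mulmx1 hW.
rewrite AW -mulmxA mul_lin.
have h2 : c * ('i%C * s) + - ('i%C * s) * c = 0 by ring.
have h1 : c * c + - ('i%C * s) * ('i%C * s) = 1.
  rewrite (_ : - ('i%C * s) * ('i%C * s) = - ('i%C * 'i%C) * (s * s)); last by ring.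
  by rewrite muliiC opprK mul1r /c /s -!rmorphM -rmorphD -!expr2 cos2Dsin2 rmorph1.
by rewrite h1 h2 scale0r addr0 scale1r mulmx1.
Qed.
End Exp.



Ltac splitifs := repeat match goal with |- context [if ?b then _ else _] => case: (boolP b) => ? end.
Ltac crush := rewrite /Wletter /=; splitifs; try done; lia.

Lemma fA1a n k m : (2 <= n)%N -> (1 <= k <= n)%N -> (1 <= m < k)%N -> (m.+2 <= n)%N ->
  anti (Wletter n k m.+1 (if k == n then m else m.+1)) (Wletter n k m (if k == n then m else m.+1)) = true.
Proof. case: (boolP (k == n)) => hk; move=> *; crush. Qed.

Lemma fA1b n k m q : (2 <= n)%N -> (1 <= k <= n)%N -> (1 <= m < k)%N -> (m.+2 <= n)%N ->
  (1 <= q < n)%N -> q != (if k == n then m else m.+1) ->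
  anti (Wletter n k m.+1 q) (Wletter n k m q) = false.
Proof. case: (boolP (k == n)) => hk; move=> *; crush. Qed.

Lemma fA2a n k m : (2 <= n)%N -> (1 <= k <= n)%N -> (k <= m < n)%N ->
  anti (Wletter n k m m) (Wletter n k m.+1 m) = true.
Proof. case: (boolP (k == n)) => hk; move=> *; crush. Qed.

Lemma fA2b n k m q : (2 <= n)%N -> (1 <= k <= n)%N -> (k <= m < n)%N ->
  (1 <= q < n)%N -> q != m ->
  anti (Wletter n k m q) (Wletter n k m.+1 q) = false.
Proof. case: (boolP (k == n)) => hk; move=> *; crush. Qed.

Lemma fC1n n k m j q : (2 <= n)%N -> (1 <= k <= n)%N -> (1 <= m < k)%N -> (m.+1 < j <= n)%N ->
  (1 <= q < n)%N -> k != n ->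
  anti (Wletter n k j q) (Wletter n k m.+1 q) (+) anti (Wletter n k j q) (Wletter n k m q) = false.
Proof. case: (boolP (k == n)) => hk; move=> *; crush. Qed.

Lemma fC1m n k m j : (2 <= n)%N -> (1 <= k <= n)%N -> (1 <= m < k)%N -> (m.+1 < j <= n)%N ->
  k == n ->
  anti (Wletter n k j m) (Wletter n k m.+1 m) (+) anti (Wletter n k j m) (Wletter n k m m) = true.
Proof. case: (boolP (k == n)) => hk; move=> *; crush. Qed.

Lemma fC1m1 n k m j : (2 <= n)%N -> (1 <= k <= n)%N -> (1 <= m < k)%N -> (m.+1 < j <= n)%N ->
  k == n ->
  anti (Wletter n k j m.+1) (Wletter n k m.+1 m.+1) (+) anti (Wletter n k j m.+1) (Wletter n k m m.+1) = true.
Proof. case: (boolP (k == n)) => hk; move=> *; crush. Qed.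

Lemma fC1o n k m j q : (2 <= n)%N -> (1 <= k <= n)%N -> (1 <= m < k)%N -> (m.+1 < j <= n)%N ->
  (1 <= q < n)%N -> k == n -> q != m -> q != m.+1 ->
  anti (Wletter n k j q) (Wletter n k m.+1 q) (+) anti (Wletter n k j q) (Wletter n k m q) = false.
Proof. case: (boolP (k == n)) => hk; move=> *; crush. Qed.

Lemma fC2 n k m j q : (2 <= n)%N -> (1 <= k <= n)%N -> (k <= m < n)%N -> (1 <= j < k)%N ->
  (1 <= q < n)%N ->
  anti (Wletter n k j q) (Wletter n k m q) (+) anti (Wletter n k j q) (Wletter n k m.+1 q) = false.
Proof. case: (boolP (k == n)) => hk; move=> *; crush. Qed.


Section Main.
Variable R : realType.
Local Notation C := R[i].

Lemma sgn_xor (a b : bool) : sgn R a * sgn R b = sgn R (a (+) b).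
Proof. by case: a; case: b; rewrite /sgn /= ?mulrNN ?mulr1 ?mul1r. Qed.

Lemma prod_sgn0 M (f : nat -> bool) :
  (forall l, (l < M)%N -> f l = false) -> \prod_(l < M) sgn R (f l) = 1.
Proof. by move=> h; apply: big1 => l _; rewrite h. Qed.

Lemma prod_sgn1 M (f : nat -> bool) x : (x < M)%N -> f x ->
  (forall l, (l < M)%N -> l != x -> f l = false) -> \prod_(l < M) sgn R (f l) = -1.
Proof.
move=> hx fx h; rewrite (bigD1 (Ordinal hx)) //= fx big1 ?mulr1 // => l hl.
rewrite h //; move: hl; apply: contra => /eqP e; apply/eqP/val_inj.
Qed.

Lemma prod_sgn2 M (f : nat -> bool) x y : (x < M)%N -> (y < M)%N -> x != y -> f x -> f y ->
  (forall l, (l < M)%N -> l != x -> l != y -> f l = false) -> \prod_(l < M) sgn R (f l) = 1.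
Proof.
move=> hx hy xy fx fy h; rewrite (bigD1 (Ordinal hx)) //= fx.
rewrite (bigD1 (Ordinal hy)) /=; last by rewrite -val_eqE /= eq_sym.
rewrite fy big1 ?mulr1 /sgn ?mulrNN ?mulr1 // => l /andP [hl1 hl2].
by rewrite h.
Qed.

Variables (n k : nat).
Local Notation W := (W R n k).

Definition sig j : C := if (k == n) && (j < n)%N then -1 else 1.

Lemma sig_sq j : sig j * sig j = 1.
Proof. by rewrite /sig; case: ifP; rewrite ?mulrNN mulr1. Qed.

Lemma sig_conj j : conjc (sig j) = sig j.
Proof. by rewrite /sig; case: ifP; rewrite ?rmorphN rmorph1. Qed.

Lemma WE j : W j = sig j *: pstring R (fun l : 'I_(n - 1) => Wletter n k j l.+1).
Proof. by []. Qed.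

Lemma W_sq j : W j *m W j = 1%:M.
Proof. by rewrite WE -scalemxAl -scalemxAr scalerA sig_sq scale1r pstring_sq. Qed.

Lemma W_adj j : adjmx (W j) = W j.
Proof. by rewrite WE adjmxZ pstring_adj sig_conj. Qed.

Lemma W_comm x y : W x *m W y =
  (\prod_(l < n - 1) sgn R (anti (Wletter n k x l.+1) (Wletter n k y l.+1))) *: (W y *m W x).
Proof.
rewrite !WE -!scalemxAl -!scalemxAr !scalerA pstring_comm scalerA.
by congr (_ *: _); ring.
Qed.

Lemma gen_props N (A B V : 'M[C]_N) : A *m A = 1%:M -> B *m B = 1%:M ->
  adjmx A = A -> adjmx B = B -> A *m B = - (B *m A) -> V *m (A *m B) = (A *m B) *m V ->
  [/\ ('i%C *: (A *m B)) *m ('i%C *: (A *m B)) = 1%:M,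
      adjmx ('i%C *: (A *m B)) = 'i%C *: (A *m B) &
      ('i%C *: (A *m B)) *m V = V *m ('i%C *: (A *m B))].
Proof.
move=> hA hB aA aB hAB hV.
have hBA : B *m A = - (A *m B) by rewrite hAB opprK.
split.
- rewrite -scalemxAl -scalemxAr scalerA muliiC.
  rewrite mulmxA -(mulmxA A B A) hBA mulmxN mulNmx mulmxA hA mul1mx hB.
  by rewrite scaleN1r opprK.
- by rewrite adjmxZ adjmxM aA aB conjI hBA scaleNr scalerN opprK.
- by rewrite -scalemxAl -scalemxAr hV.
Qed.

Lemma comm_pair N (A B V : 'M[C]_N) s1 s2 :
  V *m A = s1 *: (A *m V) -> V *m B = s2 *: (B *m V) -> s1 * s2 = 1 ->
  V *m (A *m B) = (A *m B) *m V.
Proof.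
move=> h1 h2 h; rewrite mulmxA h1 -scalemxAl -mulmxA h2 -scalemxAr scalerA h scale1r.
by rewrite mulmxA.
Qed.

End Main.


Theorem lemma5 (R : realType) (n k : nat) (theta : R) :
  (2 <= n)%N -> (1 <= k <= n)%N ->
  (forall m : nat, (1 <= m < k)%N -> forall j : nat, (m.+1 < j <= n)%N ->
     Rot n k theta m *m W R n k j *m adjmx (Rot n k theta m) = W R n k j) /\
  (forall m : nat, (k <= m < n)%N -> forall j : nat, (1 <= j < k)%N ->
     Rot n k theta m *m W R n k j *m adjmx (Rot n k theta m) = W R n k j).
Proof.
move=> hn hk; split.
- move=> m hm j hj.
  have hmk : (m < k)%N by case/andP: hm.
  rewrite /Rot /Gen hmk.
  set x' := if k == n then m else m.+1.
  have hx' : (1 <= x' < n)%N by rewrite /x'; case: ifP => /eqP; lia.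
  have hanti : W R n k m.+1 *m W R n k m = - (W R n k m *m W R n k m.+1).
    rewrite W_comm (@prod_sgn1 R _ (fun q => anti (Wletter n k m.+1 q.+1) (Wletter n k m q.+1)) x'.-1) ?scaleN1r //.
    + lia.
    + rewrite /= prednK; last lia.
      by apply: fA1a; lia.
    + move=> l hl hlx /=; apply: fA1b; try lia.
  have comm : W R n k j *m (W R n k m.+1 *m W R n k m) = (W R n k m.+1 *m W R n k m) *m W R n k j.
    apply: (comm_pair (W_comm _ _ _ _ _) (W_comm _ _ _ _ _)).
    rewrite -big_split /=; under eq_bigr do rewrite sgn_xor.
    case: (boolP (k == n)) => hkn.
    + apply: (@prod_sgn2 R _ (fun q => anti (Wletter n k j q.+1) (Wletter n k m.+1 q.+1)
         (+) anti (Wletter n k j q.+1) (Wletter n k m q.+1)) m.-1 m).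
      * lia.
      * lia.
      * lia.
      * rewrite /= prednK; last lia. by apply: fC1m; lia.
      * by apply: fC1m1; lia.
      * move=> l hl h1 h2 /=; apply: (@fC1o n k m j l.+1); lia.
    + apply: (@prod_sgn0 R _ (fun q => anti (Wletter n k j q.+1) (Wletter n k m.+1 q.+1)
         (+) anti (Wletter n k j q.+1) (Wletter n k m q.+1))) => l hl /=; apply: fC1n; lia.
  have [h1 h2 h3] := gen_props (W_sq _ _ _ _) (W_sq _ _ _ _) (W_adj _ _ _ _) (W_adj _ _ _ _) hanti comm.
  exact: (rot_fix h1).
- move=> m hm j hj.
  have hmk : (m < k)%N = false by apply/negbTE; rewrite -leqNgt; case/andP: hm.
  rewrite /Rot /Gen hmk.
  have hanti : W R n k m *m W R n k m.+1 = - (W R n k m.+1 *m W R n k m).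
    rewrite W_comm (@prod_sgn1 R _ (fun q => anti (Wletter n k m q.+1) (Wletter n k m.+1 q.+1)) m.-1) ?scaleN1r //.
    + lia.
    + rewrite /= prednK; last lia.
      by apply: fA2a; lia.
    + move=> l hl hlx /=; apply: fA2b; lia.
  have comm : W R n k j *m (W R n k m *m W R n k m.+1) = (W R n k m *m W R n k m.+1) *m W R n k j.
    apply: (comm_pair (W_comm _ _ _ _ _) (W_comm _ _ _ _ _)).
    rewrite -big_split /=; under eq_bigr do rewrite sgn_xor.
    apply: (@prod_sgn0 R _ (fun q => anti (Wletter n k j q.+1) (Wletter n k m q.+1)
         (+) anti (Wletter n k j q.+1) (Wletter n k m.+1 q.+1))) => l hl /=; apply: fC2; lia.
  have [h1 h2 h3] := gen_props (W_sq _ _ _ _) (W_sq _ _ _ _) (W_adj _ _ _ _) (W_adj _ _ _ _) hanti comm.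
  exact: (rot_fix h1).
Qed.
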